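(* Let $K \geq 2$ be an integer and $\epsilon > 0$ small. For $x$ large put $$L = \lfloor (\log\log\log x)^{\frac13 - \epsilon}\rfloor + 1,\qquad Q = \exp\big((\log\log x)^{1-\epsilon}\big),\qquad M = \lfloor 16K^2 \rfloor + 1.$$ Suppose $p_1, \dots, p_T$ are distinct primes in the interval $[\exp((\log Q)^{\frac{4}{ML}}), Q]$ with $T \geq (2ML^2)^2$ and $$\frac12 (\log Q)^{\frac{1}{ML}} \leq \prod_{t=1}^{T}\left(1 - \frac{1}{p_t}\right)^{-1} \leq \frac32 (\log Q)^{\frac{1}{ML}}.$$ For $I \subseteq \{1,\dots,T\}$ let $m_I = \prod_{t\in I} p_t$, and let $$\mathcal{H} = \{0 \leq h \leq K\log x : h \not\equiv |I| - 1 \pmod{m_I} \text{ for every } I \subseteq \{1,\dots,T\} \text{ with } 1 \leq |I| \leq 2ML^2\}.$$ Then there is a constant $C = C(K,\epsilon)>0$ such that for all sufficiently large $x$ (depending only on $K,\epsilon$), and every such choice of primes, $$|\mathcal{H}| \leq C\,\frac{(16ML^2)^{8M^2L^4}(\log\log Q)^{4M^2L^4}}{(\log Q)^{2L}}\cdot K\log x.$$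
   Context: Here $h$ ranges over integers; $|I|$ denotes the cardinality of $I$. *)

(* Defs.v *)
From Stdlib Require Import Reals Lra Lia ZArith Arith List Znumtheory.
Import ListNotations.
Open Scope R_scope.

(* All sublists (= subsets, as increasing lists) of a list. *)
Fixpoint sublists (l : list nat) : list (list nat) :=
  match l with
  | [] => [[]]
  | a :: l' => let s := sublists l' in map (cons a) s ++ s
  end.

(* Subsets I of the index set {0,...,T-1} (the paper's {1,...,T}, shifted). *)
Definition index_subsets (T : nat) : list (list nat) := sublists (seq 0 T).

Definition m_I (p : nat -> nat) (I : list nat) : nat :=
  fold_right Nat.mul 1%nat (map p I).

Definition floorZ (r : R) : Z := Int_part r.

Definition L_of (eps x : R) : nat :=
  (Z.to_nat (floorZ (Rpower (ln (ln (ln x))) (1/3 - eps))) + 1)%nat.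

Definition Q_of (eps x : R) : R := exp (Rpower (ln (ln x)) (1 - eps)).

Definition M_of (K : nat) : nat := (16 * K * K + 1)%nat.

Definition admissibleb (p : nat -> nat) (T bound h : nat) : bool :=
  forallb (fun I =>
     if andb (1 <=? length I)%nat (length I <=? bound)%nat
     then negb (Nat.eqb (h mod m_I p I) ((length I - 1) mod m_I p I))
     else true) (index_subsets T).

Definition H_list (p : nat -> nat) (T bound : nat) (K x : R) : list nat :=
  filter (fun h => andb (if Rle_dec (INR h) (K * ln x) then true else false)
                        (admissibleb p T bound h))
         (seq 0 (Z.to_nat (up (K * ln x)) + 1)).

Definition euler_prod (p : nat -> nat) (T : nat) : R :=
  fold_right Rmult 1 (map (fun t => / (1 - / INR (p t))) (seq 0 T)).

(* Main.v *)
Require Import Defs.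
From Stdlib Require Import Reals Lra Lia ZArith Arith List Znumtheory.
Import ListNotations.
Open Scope R_scope.
Open Scope R_scope.

Fixpoint rsum {A} (f : A -> R) (l : list A) : R :=
  match l with [] => 0 | a :: l' => f a + rsum f l' end.
Fixpoint rprod (f : nat -> R) (l : list nat) : R :=
  match l with [] => 1 | a :: l' => f a * rprod f l' end.
Fixpoint nsum {A} (f : A -> nat) (l : list A) : nat :=
  match l with [] => 0%nat | a :: l' => (f a + nsum f l')%nat end.

Lemma rsum_app {A} (f : A -> R) l1 l2 : rsum f (l1 ++ l2) = rsum f l1 + rsum f l2.
Proof. induction l1; simpl; [lra| rewrite IHl1; lra]. Qed.
Lemma rsum_map {A B} (f : B -> R) (g : A -> B) l : rsum f (map g l) = rsum (fun x => f (g x)) l.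
Proof. induction l; simpl; [lra| rewrite IHl; lra]. Qed.
Lemma rsum_plus {A} (f g : A -> R) l : rsum (fun x => f x + g x) l = rsum f l + rsum g l.
Proof. induction l; simpl; [lra| rewrite IHl; lra]. Qed.
Lemma rsum_scal {A} (c : R) (f : A -> R) l : rsum (fun x => c * f x) l = c * rsum f l.
Proof. induction l; simpl; [lra| rewrite IHl; lra]. Qed.
Lemma rsum_ext {A} (f g : A -> R) l : (forall x, In x l -> f x = g x) -> rsum f l = rsum g l.
Proof. induction l; simpl; intros H; auto. rewrite H, IHl; auto. Qed.
Lemma rsum_le {A} (f g : A -> R) l : (forall x, In x l -> f x <= g x) -> rsum f l <= rsum g l.
Proof. induction l; simpl; intros H; [lra|]. assert (f a <= g a) by auto. assert (rsum f l <= rsum g l) by auto. lra. Qed.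
Lemma rsum_nonneg {A} (f : A -> R) l : (forall x, In x l -> 0 <= f x) -> 0 <= rsum f l.
Proof. induction l; simpl; intros H; [lra|]. assert (0 <= f a) by auto. assert (0 <= rsum f l) by auto. lra. Qed.
Lemma rsum_swap {A B} (F : A -> B -> R) l1 l2 :
  rsum (fun a => rsum (fun b => F a b) l2) l1 = rsum (fun b => rsum (fun a => F a b) l1) l2.
Proof. induction l1; simpl.
  - induction l2; simpl; lra.
  - rewrite IHl1. rewrite <- rsum_plus. reflexivity. Qed.

Lemma rsum_zero {A} (l : list A) : rsum (fun _ => 0) l = 0.
Proof. induction l; simpl; lra. Qed.

Lemma expand c l : rsum (fun D => rprod c D) (sublists l) = rprod (fun t => 1 + c t) l.
Proof. induction l; simpl. lra. rewrite rsum_app, rsum_map. simpl.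
  rewrite rsum_scal. assert (E: rsum (rprod c) (sublists l) = rprod (fun t => 1 + c t) l) by exact IHl.
  change (rsum (fun D => rprod c D) (sublists l)) with (rsum (rprod c) (sublists l)). rewrite E. lra. Qed.

Definition trunc (K : nat) (c : nat -> R) (D : list nat) : R :=
  if (length D <=? K)%nat then rprod c D else 0.

Lemma trunc0 c l : rsum (trunc 0 c) (sublists l) = 1.
Proof. induction l; simpl. unfold trunc; simpl; lra.
  rewrite rsum_app, rsum_map, IHl.
  rewrite (rsum_ext _ (fun _ => 0)). rewrite rsum_zero; lra.
  intros; unfold trunc; reflexivity. Qed.

Lemma truncS K c a l : rsum (trunc (S K) c) (sublists (a :: l)) =
   c a * rsum (trunc K c) (sublists l) + rsum (trunc (S K) c) (sublists l).
Proof. simpl. rewrite rsum_app, rsum_map. f_equal. rewrite <- rsum_scal.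
  apply rsum_ext. intros D _. unfold trunc. simpl. destruct (length D <=? K)%nat; simpl; lra. Qed.

Lemma rprod_bounds c l : (forall t, In t l -> 0 <= c t <= 1) -> 0 <= rprod c l <= 1.
Proof. induction l; simpl; intros H. lra. assert (0 <= c a <= 1) by auto.
  assert (0 <= rprod c l <= 1) by auto. split. apply Rmult_le_pos; lra.
  apply Rle_trans with (1 * 1); [|lra]. apply Rmult_le_compat; lra. Qed.

Lemma brun (c : nat -> R) l : (forall t, In t l -> -1 <= c t <= 0) -> forall K,
  (Nat.even K = true -> rprod (fun t => 1 + c t) l <= rsum (trunc K c) (sublists l)) /\
  (Nat.even K = false -> rsum (trunc K c) (sublists l) <= rprod (fun t => 1 + c t) l).
Proof. induction l; intros H K.
  - simpl. unfold trunc; simpl. split; intros; lra.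
  - destruct K as [|K].
    + rewrite trunc0. split; intros E; [|discriminate].
      apply rprod_bounds. intros t Ht. specialize (H t Ht). lra.
    + rewrite truncS. assert (Hl : forall t, In t l -> -1 <= c t <= 0) by (intros; apply H; simpl; auto).
      assert (Ha : -1 <= c a <= 0) by (apply H; simpl; auto).
      destruct (IHl Hl K) as [H1 H2]. destruct (IHl Hl (S K)) as [H3 H4].
      simpl rprod. rewrite Nat.even_succ in *. rewrite <- Nat.negb_even in *.
      destruct (Nat.even K) eqn:E; simpl in *; split; intros; try discriminate.
      * specialize (H1 eq_refl). specialize (H4 eq_refl).
        assert (c a * rsum (trunc K c) (sublists l) <= c a * rprod (fun t => 1 + c t) l)
          by (apply Rmult_le_compat_neg_l; lra). lra.
      * specialize (H2 eq_refl). specialize (H3 eq_refl).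
        assert (c a * rprod (fun t => 1 + c t) l <= c a * rsum (trunc K c) (sublists l))
          by (apply Rmult_le_compat_neg_l; lra). lra.
Qed.

Lemma rprod_nonneg c l : (forall t, In t l -> 0 <= c t) -> 0 <= rprod c l.
Proof. induction l; simpl; intros H; [lra|]. apply Rmult_le_pos; auto. Qed.

Lemma rprod_abs c r l : (forall t, In t l -> Rabs (c t) <= r t) -> Rabs (rprod c l) <= rprod r l.
Proof. induction l; simpl; intros H. rewrite Rabs_R1; lra.
  rewrite Rabs_mult. apply Rmult_le_compat; try apply Rabs_pos; auto. Qed.

Lemma rprod_scal2 r l : rprod (fun t => 2 * r t) l = 2 ^ length l * rprod r l.
Proof. induction l; simpl; [lra|]. rewrite IHl; ring. Qed.

Lemma tail_bound K c r l : (forall t, Rabs (c t) <= r t) ->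
  rsum (trunc K c) (sublists l) <= rprod (fun t => 1 + c t) l + (/2)^K * rprod (fun t => 1 + 2 * r t) l.
Proof. intros H. rewrite <- !expand. rewrite <- rsum_scal, <- rsum_plus.
  apply rsum_le. intros D _. unfold trunc.
  assert (Hr : forall t, 0 <= r t) by (intro t; specialize (H t); pose proof (Rabs_pos (c t)); lra).
  assert (A1 : Rabs (rprod c D) <= rprod r D) by (apply rprod_abs; auto).
  assert (A2 : 0 <= rprod r D) by (apply rprod_nonneg; auto).
  rewrite rprod_scal2.
  assert (A3: 0 <= (/2)^K) by (apply pow_le; lra).
  assert (A4: 0 <= 2 ^ length D) by (apply pow_le; lra).
  destruct (length D <=? K)%nat eqn:E.
  - assert (0 <= (/ 2) ^ K * (2 ^ length D * rprod r D)) by (repeat apply Rmult_le_pos; auto). lra.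
  - apply Nat.leb_gt in E.
    assert (1 <= (/2)^K * 2 ^ length D).
    { replace (length D) with (K + (length D - K))%nat by lia. rewrite pow_add, <- Rmult_assoc.
      rewrite <- Rpow_mult_distr. replace (/2 * 2) with 1 by field. rewrite pow1, Rmult_1_l.
      apply pow_R1_Rle; lra. }
    assert (- rprod r D <= rprod c D) by (pose proof (Rle_abs (- rprod c D)); rewrite Rabs_Ropp in *; lra).
    assert (rprod r D <= (/2)^K * 2 ^ length D * rprod r D).
    { rewrite <- (Rmult_1_l (rprod r D)) at 1. apply Rmult_le_compat_r; auto. }
    lra.
Qed.

Lemma err_bound K c l : 0 <= c -> rsum (trunc K (fun _ => c)) (sublists l) <= (1 + INR (length l) * c)^K.
Proof. intros Hc. revert K; induction l; intros K.
  - simpl. unfold trunc; simpl. destruct K; simpl; [lra|]. 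
    rewrite Rmult_0_l, Rplus_0_r, pow1. lra.
  - destruct K. rewrite trunc0; simpl; lra.
    rewrite truncS. specialize (IHl K) as H1. specialize (IHl (S K)) as H2.
    simpl length. rewrite S_INR. simpl pow.
    assert (0 <= INR (length l)) by apply pos_INR.
    assert (P: (1 + INR (length l) * c) ^ K <= (1 + (INR (length l) + 1) * c) ^ K)
      by (apply pow_incr; nra).
    assert (0 <= (1 + INR (length l) * c) ^ K) by (apply pow_le; nra).
    change ((1 + INR (length l) * c) ^ S K) with ((1 + INR (length l) * c) * (1 + INR (length l) * c) ^ K) in H2.
    set (X := (1 + INR (length l) * c) ^ K) in *. set (Y := (1 + (INR (length l) + 1) * c) ^ K) in *.
    assert (c * rsum (trunc K (fun _ => c)) (sublists l) <= c * X) by (apply Rmult_le_compat_l; auto).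
    assert ((1 + (INR (length l) + 1) * c) * X <= (1 + (INR (length l) + 1) * c) * Y) by (apply Rmult_le_compat_l; nra).
    nra.
Qed.

Lemma rprod_exp c l : (forall t, In t l -> 0 <= 1 + c t) -> rprod (fun t => 1 + c t) l <= exp (rsum c l).
Proof. induction l; simpl; intros H. rewrite exp_0; lra.
  rewrite exp_plus. apply Rmult_le_compat; auto. apply rprod_nonneg; auto. apply exp_ineq1_le. Qed.
Open Scope nat_scope.

Definition b2 (b : bool) : nat := if b then 1 else 0.

Lemma nsum_app {A} (f : A -> nat) l1 l2 : nsum f (l1 ++ l2) = nsum f l1 + nsum f l2.
Proof. induction l1; simpl; lia. Qed.
Lemma nsum_ext {A} (f g : A -> nat) l : (forall x, In x l -> f x = g x) -> nsum f l = nsum g l.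
Proof. induction l; simpl; intros H; auto; rewrite H, IHl; auto. Qed.
Lemma nsum_le {A} (f g : A -> nat) l : (forall x, In x l -> f x <= g x) -> nsum f l <= nsum g l.
Proof. induction l; simpl; intros H. lia. 
  assert (f a <= g a) by (apply H; auto).
  assert (nsum f l <= nsum g l) by (apply IHl; intros; apply H; auto). lia. Qed.
Lemma nsum_scal {A} c (f : A -> nat) l : nsum (fun x => c * f x) l = c * nsum f l.
Proof. induction l; simpl; lia. Qed.
Lemma nsum_plus {A} (f g : A -> nat) l : nsum (fun x => f x + g x) l = nsum f l + nsum g l.
Proof. induction l; simpl; lia. Qed.
Lemma nsum_swap {A B} (F : A -> B -> nat) l1 l2 :
  nsum (fun a => nsum (fun b => F a b) l2) l1 = nsum (fun b => nsum (fun a => F a b) l1) l2.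
Proof. induction l1; simpl.
  - induction l2; simpl; lia.
  - rewrite IHl1. rewrite <- nsum_plus. reflexivity. Qed.
Lemma nsum_const {A} c (l : list A) : nsum (fun _ => c) l = c * length l.
Proof. induction l; simpl; lia. Qed.

Lemma nsum_shift F s m : nsum F (seq s m) = nsum (fun i => F (s + i)) (seq 0 m).
Proof. revert s F; induction m; intros s F; simpl; auto. rewrite IHm, (IHm 1).
  rewrite Nat.add_0_r. f_equal. apply nsum_ext; intros; f_equal; lia. Qed.

Lemma block F a b : nsum F (seq 0 (b * a)) = nsum (fun j => nsum (fun i => F (a * j + i)) (seq 0 a)) (seq 0 b).
Proof. induction b. reflexivity.
  replace (S b * a) with (b * a + a) by lia. rewrite seq_app, nsum_app, IHb.
  rewrite seq_S, nsum_app. rewrite (nsum_shift F (0 + b*a) a). simpl. f_equal.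
  rewrite Nat.add_0_r. apply nsum_ext; intros; f_equal; lia. Qed.

Lemma nsum_b2_filter {A} (f : A -> bool) l : nsum (fun x => b2 (f x)) l = length (filter f l).
Proof. induction l; simpl; auto. destruct (f a); simpl; lia. Qed.

Lemma filter_compl {A} (f : A -> bool) l : length (filter f l) + length (filter (fun x => negb (f x)) l) = length l.
Proof. induction l; simpl; auto. destruct (f a); simpl; lia. Qed.

Lemma inj_count g p R : R <= p -> (forall j, j < p -> g j < p) ->
  (forall j1 j2, j1 < p -> j2 < p -> g j1 = g j2 -> j1 = j2) ->
  nsum (fun j => b2 (g j <? R)) (seq 0 p) = R.
Proof. intros HR Hr Hi.
  assert (ND : NoDup (map g (seq 0 p))).
  { apply NoDup_map_NoDup_ForallPairs; [|apply seq_NoDup].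
    intros x y Hx Hy E. apply in_seq in Hx, Hy. apply Hi; lia. }
  transitivity (nsum (fun v => b2 (v <? R)) (map g (seq 0 p))).
  { clear. induction (seq 0 p); simpl; auto. }
  rewrite nsum_b2_filter.
  assert (L1 : length (filter (fun v => v <? R) (map g (seq 0 p))) <= R).
  { apply Nat.le_trans with (length (seq 0 R)); [| rewrite length_seq; lia]. apply NoDup_incl_length. apply NoDup_filter; auto.
    intros v Hv. apply filter_In in Hv. destruct Hv as [_ Hv]. apply Nat.ltb_lt in Hv. apply in_seq; lia. }
  assert (L2 : length (filter (fun v => negb (v <? R)) (map g (seq 0 p))) <= p - R).
  { apply Nat.le_trans with (length (seq R (p - R))); [| rewrite length_seq; lia]. apply NoDup_incl_length. apply NoDup_filter; auto.
    intros v Hv. apply filter_In in Hv. destruct Hv as [Hv1 Hv]. 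
    apply Bool.negb_true_iff, Nat.ltb_ge in Hv. apply in_map_iff in Hv1. destruct Hv1 as [j [<- Hj]].
    apply in_seq in Hj. specialize (Hr j ltac:(lia)). apply in_seq; lia. }
  pose proof (filter_compl (fun v => v <? R) (map g (seq 0 p))). rewrite length_map, length_seq in H. lia.
Qed.
Open Scope nat_scope.

Lemma natdivZ a b : Nat.divide a b -> (Z.of_nat a | Z.of_nat b)%Z.
Proof. intros [k ->]. exists (Z.of_nat k). lia. Qed.

Lemma Zdivnat a b : (Z.of_nat a | Z.of_nat b)%Z -> Nat.divide a b.
Proof. intros [k Hk]. destruct (Nat.eq_dec a 0) as [->|Ha].
  - exists 0. lia.
  - assert (0 <= k)%Z by nia. exists (Z.to_nat k). nia. Qed.

Lemma mI_cons p s D : m_I p (s :: D) = p s * m_I p D.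
Proof. reflexivity. Qed.

Lemma notdiv p q D : prime (Z.of_nat q) -> (forall s, In s D -> prime (Z.of_nat (p s)) /\ p s <> q) ->
  ~ (Z.of_nat q | Z.of_nat (m_I p D))%Z.
Proof. intros Hq. induction D; intros H Hd.
  - simpl in Hd. apply Z.divide_pos_le in Hd; [|lia]. apply prime_ge_2 in Hq. lia.
  - rewrite mI_cons, Nat2Z.inj_mul in Hd. apply prime_mult in Hd; auto. destruct Hd as [Hd|Hd].
    + destruct (H a (or_introl eq_refl)) as [Pa Na]. apply prime_div_prime in Hd; auto. lia.
    + apply IHD; auto. intros; apply H; simpl; auto.
Qed.

Lemma dvd_mI p D t : In t D -> Nat.divide (p t) (m_I p D).
Proof. induction D; simpl; intros H; [contradiction|]. destruct H as [->|H].
  - exists (m_I p D). unfold m_I. simpl. lia.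
  - destruct (IHD H) as [k Hk]. exists (p a * k). rewrite mI_cons, Hk. ring. Qed.

Definition good (p : nat -> nat) (R : nat) (D : list nat) := NoDup D /\ (forall s, In s D -> prime (Z.of_nat (p s)) /\ R < p s) /\
  (forall s1 s2, In s1 D -> In s2 D -> p s1 = p s2 -> s1 = s2).

Lemma good_tail p R t D : good p R (t :: D) -> good p R D.
Proof. intros [H1 [H2 H3]]. inversion H1; subst. split; auto. split; intros; [apply H2|apply H3]; simpl; auto. Qed.

Lemma good_notdiv p R t D : good p R (t :: D) -> ~ (Z.of_nat (p t) | Z.of_nat (m_I p D))%Z.
Proof. intros [H1 [H2 H3]]. inversion H1; subst. apply notdiv. apply H2; simpl; auto.
  intros s Hs. split. apply H2; simpl; auto. intros E. apply H3 in E; simpl; auto. subst; contradiction. Qed.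

Lemma mI_pos p R D : good p R D -> 0 < m_I p D.
Proof. induction D; intros G. unfold m_I; simpl; lia. rewrite mI_cons.
  destruct G as [G1 [G2 G3]]. assert (R < p a) by (apply G2; simpl; auto).
  assert (0 < m_I p D) by (apply IHD; eapply good_tail; split; eauto). nia. Qed.

Lemma prod_div p R D X : good p R D -> (forall s, In s D -> Nat.divide (p s) X) -> Nat.divide (m_I p D) X.
Proof. induction D; intros G H. simpl. apply Nat.divide_1_l.
  rewrite mI_cons. assert (Hm : Nat.divide (m_I p D) X) by (apply IHD; [eapply good_tail; eauto| intros; apply H; simpl; auto]).
  destruct Hm as [k Hk]. assert (Ha : Nat.divide (p a) (k * m_I p D)) by (rewrite <- Hk; apply H; simpl; auto).
  apply natdivZ in Ha. rewrite Nat2Z.inj_mul, Z.mul_comm in Ha. apply Gauss in Ha.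
  - apply Zdivnat in Ha. destruct Ha as [j Hj]. exists j. rewrite Hk, Hj; ring.
  - apply prime_rel_prime. destruct G as [G1 [G2 G3]]. apply G2; simpl; auto. 
    apply (good_notdiv p R); auto.
Qed.

Lemma mod_eq_div q a e : 0 < q -> a mod q = (a + e) mod q -> Nat.divide q e.
Proof. intros Hq E. pose proof (Nat.div_mod_eq a q). pose proof (Nat.div_mod_eq (a + e) q).
  exists ((a + e) / q - a / q). rewrite Nat.mul_sub_distr_r. lia. Qed.

Lemma inj_mod q m i j1 j2 : prime (Z.of_nat q) -> ~ (Z.of_nat q | Z.of_nat m)%Z -> j1 < q -> j2 < q ->
  (m * j1 + i) mod q = (m * j2 + i) mod q -> j1 = j2.
Proof. intros Hq Hm H1 H2 E. pose proof (prime_ge_2 _ Hq) as Q2.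
  assert (forall a b, a <= b -> b < q -> (m * a + i) mod q = (m * b + i) mod q -> a = b).
  { intros a b Hab Hb Eab. replace (m * b + i) with ((m * a + i) + m * (b - a)) in Eab by nia.
    apply mod_eq_div in Eab; [|lia]. apply natdivZ in Eab. rewrite Nat2Z.inj_mul in Eab.
    apply prime_mult in Eab; auto. destruct Eab as [Eab|Eab]; [contradiction|].
    destruct (Nat.eq_dec (b - a) 0); [lia|]. apply Z.divide_pos_le in Eab; lia. }
  destruct (Nat.le_ge_cases j1 j2); [apply H; auto | symmetry; apply H; auto].
Qed.

Lemma forallb_ext_in {A} (f g : A -> bool) l : (forall x, In x l -> f x = g x) -> forallb f l = forallb g l.
Proof. induction l; simpl; intros H; auto. rewrite H, IHl; auto. Qed.

Definition cD (p : nat -> nat) (R : nat) (D : list nat) (h : nat) := forallb (fun t => h mod p t <? R) D.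
Definition cnt (p : nat -> nat) (R : nat) (D : list nat) (N : nat) := nsum (fun h => b2 (cD p R D h)) (seq 0 N).

Lemma period p R D j i : cD p R D (m_I p D * j + i) = cD p R D i.
Proof. unfold cD. apply forallb_ext_in. intros t Ht. destruct (dvd_mI p D t Ht) as [k Hk].
  rewrite Hk. replace (k * p t * j + i) with (i + (k * j) * p t) by lia. rewrite Nat.Div0.mod_add. reflexivity. Qed.

Lemma b2_and x y : b2 (x && y) = b2 x * b2 y.
Proof. destruct x, y; reflexivity. Qed.

Lemma full_period p R D : good p R D -> cnt p R D (m_I p D) = R ^ length D.
Proof. induction D as [|t D IH]; intros G.
  - reflexivity.
  - unfold cnt. rewrite mI_cons. rewrite block.
    assert (Hp : R < p t /\ prime (Z.of_nat (p t))) by (destruct G as [_ [G2 _]]; split; apply G2; simpl; auto).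
    pose proof (good_notdiv _ _ _ _ G) as ND.
    rewrite (nsum_ext _ (fun j => nsum (fun i => b2 ((m_I p D * j + i) mod p t <? R) * b2 (cD p R D i)) (seq 0 (m_I p D))) (seq 0 (p t))).
    2:{ intros j _. apply nsum_ext. intros i _. unfold cD at 1. simpl forallb. rewrite b2_and.
        fold (cD p R D (m_I p D * j + i)). rewrite period. reflexivity. }
    rewrite nsum_swap.
    rewrite (nsum_ext _ (fun i => R * b2 (cD p R D i))).
    2:{ intros i _. rewrite (nsum_ext _ (fun j => b2 (cD p R D i) * b2 ((fun j => (m_I p D * j + i) mod p t) j <? R))).
        2: intros; simpl; lia. rewrite nsum_scal. rewrite inj_count. lia. lia.
        intros; apply Nat.mod_upper_bound; lia.
        intros j1 j2 H1 H2 E. apply (inj_mod (p t) (m_I p D) i); tauto. }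
    rewrite nsum_scal. fold (cnt p R D (m_I p D)). rewrite IH. simpl. lia. eapply good_tail; eauto.
Qed.

Lemma cnt_le p R D a b : a <= b -> cnt p R D a <= cnt p R D b.
Proof. intros H. unfold cnt. replace b with (a + (b - a)) by lia. rewrite seq_app, nsum_app. lia. Qed.

Lemma cnt_decomp p R D N : good p R D ->
  cnt p R D N = (N / m_I p D) * R ^ length D + cnt p R D (N mod m_I p D) /\
  cnt p R D (N mod m_I p D) <= R ^ length D.
Proof. intros G. pose proof (mI_pos _ _ _ G) as Hm. set (m := m_I p D) in *.
  assert (Hr : N mod m < m) by (apply Nat.mod_upper_bound; lia).
  split; [| rewrite <- (full_period p R D G); apply cnt_le; lia].
  rewrite (Nat.div_mod_eq N m) at 1. replace (m * (N / m) + N mod m) with ((N / m) * m + N mod m) by lia.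
  unfold cnt at 1. rewrite seq_app, nsum_app. rewrite block.
  rewrite (nsum_ext _ (fun _ => R ^ length D)).
  2:{ intros j _. rewrite <- (full_period p R D G). unfold cnt. apply nsum_ext. intros i _. unfold m. rewrite period. reflexivity. }
  rewrite nsum_const, length_seq. f_equal. lia.
  rewrite nsum_shift. unfold cnt. apply nsum_ext. intros i _. simpl.
  replace (N / m * m + i) with (m_I p D * (N / m) + i) by (unfold m; lia). rewrite period. reflexivity.
Qed.
Open Scope nat_scope.

Lemma nil_sublists l : In [] (sublists l).
Proof. induction l; simpl; auto. apply in_or_app; auto. Qed.

Lemma firstn_filter_sub f l n : In (firstn n (filter f l)) (sublists l).
Proof. revert n; induction l; intros n; simpl. destruct n; simpl; auto.
  destruct (f a).
  - destruct n; simpl. apply in_or_app; right; apply nil_sublists.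
    apply in_or_app; left. apply in_map; auto.
  - apply in_or_app; right; auto.
Qed.

Lemma filter_split (g : nat -> nat) R (l : list nat) : length (filter (fun t => g t <? S R) l) =
  length (filter (fun t => g t <? R) l) + length (filter (fun t => g t =? R) l).
Proof. induction l; simpl; auto.
  destruct (Nat.ltb_spec (g a) (S R)), (Nat.ltb_spec (g a) R), (Nat.eqb_spec (g a) R); simpl; lia. Qed.

Lemma filter_sum (g : nat -> nat) R (l : list nat) : length (filter (fun t => g t <? R) l) =
  nsum (fun r => length (filter (fun t => g t =? r) l)) (seq 0 R).
Proof. induction R. simpl. induction l; simpl; auto.
  rewrite filter_split, seq_S, nsum_app, IHR. simpl. lia. Qed.

Lemma firstn_In_ {A} n (l : list A) x : In x (firstn n l) -> In x l.
Proof. intros H. rewrite <- (firstn_skipn n l). apply in_or_app; auto. Qed.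

Lemma NoDup_firstn_ {A} n (l : list A) : NoDup l -> NoDup (firstn n l).
Proof. intros H. rewrite <- (firstn_skipn n l) in H. apply NoDup_app_remove_r in H. auto. Qed.

Lemma adm_r p T R h r :
  (forall t, t < T -> prime (Z.of_nat (p t)) /\ R < p t) ->
  (forall t1 t2, t1 < T -> t2 < T -> p t1 = p t2 -> t1 = t2) ->
  admissibleb p T R h = true -> r < R ->
  length (filter (fun t => h mod p t =? r) (seq 0 T)) <= r.
Proof. intros HP HI Ha Hr.
  destruct (Nat.le_gt_cases (length (filter (fun t => h mod p t =? r) (seq 0 T))) r) as [|Hc]; auto. exfalso.
  set (I := firstn (S r) (filter (fun t => h mod p t =? r) (seq 0 T))).
  assert (HIn : forall s, In s I -> s < T /\ h mod p s = r).
  { intros s Hs. apply firstn_In_ in Hs. apply filter_In in Hs. destruct Hs as [H1 H2].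
    apply in_seq in H1. apply Nat.eqb_eq in H2. split; [lia|auto]. }
  assert (HL : length I = S r) by (unfold I; rewrite length_firstn; lia).
  assert (G : good p R I).
  { split. apply NoDup_firstn_, NoDup_filter, seq_NoDup.
    split. intros s Hs; apply HP, HIn, Hs. intros s1 s2 H1 H2; apply HI; apply HIn; auto. }
  assert (Hm : h mod m_I p I = r mod m_I p I).
  { assert (Hd : Nat.divide (m_I p I) (h - r)).
    { apply (prod_div p R); auto. intros s Hs. destruct (HIn s Hs) as [_ Hs2].
      exists (h / p s). pose proof (Nat.div_mod_eq h (p s)). lia. }
    assert (Hhr : r <= h).
    { destruct I as [|s I']; [discriminate|]. destruct (HIn s (or_introl eq_refl)) as [_ Hs2].
      rewrite <- Hs2. apply Nat.Div0.mod_le. }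
    destruct Hd as [k Hk]. replace h with (r + k * m_I p I) by lia. apply Nat.Div0.mod_add. }
  unfold admissibleb in Ha. rewrite forallb_forall in Ha.
  specialize (Ha I (firstn_filter_sub _ _ _)). rewrite HL in Ha.
  replace (1 <=? S r) with true in Ha by (symmetry; apply Nat.leb_le; lia).
  replace (S r <=? R) with true in Ha by (symmetry; apply Nat.leb_le; lia). simpl in Ha.
  rewrite Nat.sub_0_r, Hm, Nat.eqb_refl in Ha. discriminate.
Qed.

Lemma adm_count p T R h :
  (forall t, t < T -> prime (Z.of_nat (p t)) /\ R < p t) ->
  (forall t1 t2, t1 < T -> t2 < T -> p t1 = p t2 -> t1 = t2) ->
  admissibleb p T R h = true ->
  length (filter (fun t => h mod p t <? R) (seq 0 T)) <= R * R.
Proof. intros HP HI Ha. rewrite filter_sum.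
  apply Nat.le_trans with (nsum (fun _ => R) (seq 0 R)).
  - apply nsum_le. intros r Hr. apply in_seq in Hr. 
    pose proof (adm_r p T R h r HP HI Ha ltac:(lia)). lia.
  - rewrite nsum_const, length_seq. lia.
Qed.
Open Scope R_scope.

Lemma rsum_filter_len {A} (f : A -> bool) l : INR (length (filter f l)) = rsum (fun x => if f x then 1 else 0) l.
Proof. induction l. simpl; auto. simpl filter; simpl rsum. destruct (f a); [simpl length; rewrite S_INR|]; rewrite IHl; lra. Qed.

Lemma rprod_ind (z : R) (f : nat -> bool) l :
  rprod (fun t => 1 + (-(1-z) * (if f t then 1 else 0))) l = z ^ length (filter f l).
Proof. induction l; simpl; auto. destruct (f a); simpl; rewrite IHl; ring. Qed.

Lemma pow_decr z m n : 0 <= z <= 1 -> (m <= n)%nat -> z ^ n <= z ^ m.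
Proof. intros Hz H. replace n with (m + (n - m))%nat by lia. rewrite pow_add.
  assert (0 <= z ^ m) by (apply pow_le; lra). assert (0 <= z ^ (n - m) <= 1).
  { split. apply pow_le; lra. rewrite <- (pow1 (n - m)). apply pow_incr; lra. } nra. Qed.

Lemma sublists_prop l D : In D (sublists l) -> incl D l /\ (NoDup l -> NoDup D).
Proof. revert D; induction l; simpl; intros D H.
  - destruct H as [<-|[]]. split. intros x []. constructor.
  - apply in_app_or in H. destruct H as [H|H].
    + apply in_map_iff in H. destruct H as [D' [<- HD']]. destruct (IHl D' HD') as [H1 H2].
      split. intros x [->|Hx]; simpl; auto. intros ND. inversion ND; subst. constructor; auto.
    + destruct (IHl D H) as [H1 H2]. split. intros x Hx; simpl; auto. intros ND; inversion ND; auto.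
Qed.

Lemma mI_pos' p D : (forall t, In t D -> (0 < p t)%nat) -> (0 < m_I p D)%nat.
Proof. induction D; intros H. unfold m_I; simpl; lia. rewrite mI_cons.
  assert (0 < p a)%nat by (apply H; simpl; auto). assert (0 < m_I p D)%nat by (apply IHD; intros; apply H; simpl; auto). nia. Qed.

Lemma rprod_ratio p R D : (forall t, In t D -> (0 < p t)%nat) ->
  rprod (fun t => INR R / INR (p t)) D = INR (R ^ length D) / INR (m_I p D).
Proof. induction D; intros H. simpl. unfold m_I; simpl; lra.
  simpl length. rewrite mI_cons, Nat.pow_succ_r', !mult_INR. simpl rprod. rewrite IHD by (intros; apply H; simpl; auto).
  assert (0 < INR (p a)) by (apply lt_0_INR, H; simpl; auto).
  assert (0 < INR (m_I p D)) by (apply lt_0_INR, mI_pos'; intros; apply H; simpl; auto).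
  field. lra. Qed.

Lemma rprod_mult c d D : rprod (fun t => c t * d t) D = rprod c D * rprod d D.
Proof. induction D; simpl; [lra|]. rewrite IHD; ring. Qed.

Lemma rprod_const c D : rprod (fun _ => c) D = c ^ length D.
Proof. induction D; simpl; [lra|]. rewrite IHD; ring. Qed.

Lemma rprod_cD p R D h : rprod (fun t => if (h mod p t <? R)%nat then 1 else 0) D = if cD p R D h then 1 else 0.
Proof. induction D; simpl; auto. unfold cD in *. simpl. destruct (h mod p a <? R)%nat; simpl; rewrite ?IHD; lra. Qed.

Lemma cnt_real p R D N : good p R D ->
  Rabs (INR (cnt p R D N) - INR N * (INR (R ^ length D) / INR (m_I p D))) <= INR (R ^ length D).
Proof. intros G. destruct (cnt_decomp p R D N G) as [H1 H2].
  pose proof (mI_pos _ _ _ G) as Hm. set (m := m_I p D) in *. set (k := (R ^ length D)%nat) in *.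
  rewrite H1. rewrite plus_INR, !mult_INR.
  assert (HN : INR N = INR m * INR (N / m) + INR (N mod m)) by (rewrite <- mult_INR, <- plus_INR, <- Nat.div_mod_eq; reflexivity).
  rewrite HN.
  assert (0 < INR m) by (apply lt_0_INR; auto).
  assert (Hr : (N mod m < m)%nat) by (apply Nat.mod_upper_bound; lia).
  apply lt_INR in Hr. apply le_INR in H2. pose proof (pos_INR (N mod m)). pose proof (pos_INR (cnt p R D (N mod m))).
  pose proof (pos_INR k).
  replace ((INR m * INR (N / m) + INR (N mod m)) * (INR k / INR m)) with (INR (N/m) * INR k + INR (N mod m) * INR k / INR m) by (field; lra).
  assert (0 <= INR (N mod m) * INR k / INR m <= INR k).
  { split. apply Rmult_le_pos; [nra| apply Rlt_le, Rinv_0_lt_compat; lra].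
    apply Rmult_le_reg_r with (INR m); auto. unfold Rdiv. rewrite Rmult_assoc, Rinv_l by lra. nra. }
  apply Rabs_le. lra.
Qed.

Lemma sieve_bound p T R N Kc z :
  0 < z <= 1 -> Nat.even Kc = true ->
  (forall t, (t < T)%nat -> prime (Z.of_nat (p t)) /\ (R < p t)%nat) ->
  (forall t1 t2, (t1 < T)%nat -> (t2 < T)%nat -> p t1 = p t2 -> t1 = t2) ->
  INR (length (filter (admissibleb p T R) (seq 0 N))) <=
   (/z)^(R*R) * (INR N * rsum (trunc Kc (fun t => -(1-z) * (INR R / INR (p t)))) (sublists (seq 0 T))
                 + rsum (trunc Kc (fun _ => (1-z) * INR R)) (sublists (seq 0 T))).
Proof. intros Hz HK HP HI.
  set (c := fun h t => -(1-z) * (if (h mod p t <? R)%nat then 1 else 0)).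
  assert (Hiz : 0 < / z) by (apply Rinv_0_lt_compat; lra).
  assert (Hizp : 0 <= (/z)^(R*R)) by (apply pow_le; lra).
  assert (Step2 : forall h, (if admissibleb p T R h then 1 else 0) <= (/z)^(R*R) * rsum (trunc Kc (c h)) (sublists (seq 0 T))).
  { intros h. 
    destruct (brun (c h) (seq 0 T) ltac:(intros t _; unfold c; destruct (h mod p t <? R)%nat; lra) Kc) as [B1 _].
    specialize (B1 HK). unfold c in B1 at 1. rewrite rprod_ind in B1.
    assert (0 <= z ^ length (filter (fun t => (h mod p t <? R)%nat) (seq 0 T))) by (apply pow_le; lra).
    destruct (admissibleb p T R h) eqn:Ha.
    - pose proof (adm_count p T R h HP HI Ha) as Hn.
      pose proof (pow_decr z _ _ ltac:(lra) Hn).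
      assert (1 = (/z)^(R*R) * z^(R*R)) by (rewrite <- Rpow_mult_distr, Rinv_l, pow1; lra).
      assert ((/z)^(R*R) * z^(R*R) <= (/z)^(R*R) * rsum (trunc Kc (c h)) (sublists (seq 0 T))) by (apply Rmult_le_compat_l; lra).
      lra.
    - apply Rmult_le_pos; lra. }
  rewrite rsum_filter_len. eapply Rle_trans. apply rsum_le. intros h _. apply Step2.
  rewrite rsum_scal. apply Rmult_le_compat_l; auto.
  unfold trunc. rewrite rsum_swap. rewrite <- rsum_scal, <- rsum_plus. apply rsum_le.
  intros D HD. destruct (sublists_prop _ _ HD) as [Hinc HND]. specialize (HND (seq_NoDup T 0)).
  assert (G : good p R D).
  { split; auto. split. intros s Hs; apply HP. apply Hinc, in_seq in Hs; lia.
    intros s1 s2 H1 H2; apply HI; [apply Hinc, in_seq in H1| apply Hinc, in_seq in H2]; lia. }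
  assert (Hpp : forall t, In t D -> (0 < p t)%nat) by (intros t Ht; destruct G as [_ [G2 _]]; specialize (G2 t Ht); lia).
  destruct (length D <=? Kc)%nat.
  2:{ rewrite rsum_zero. lra. }
  unfold c. rewrite (rsum_ext _ (fun h => (-(1-z))^length D * (if cD p R D h then 1 else 0))).
  2:{ intros h _. rewrite (rprod_mult (fun _ => -(1-z)) (fun t => if (h mod p t <? R)%nat then 1 else 0)).
      rewrite rprod_const, rprod_cD. reflexivity. }
  rewrite rsum_scal, <- rsum_filter_len. rewrite <- nsum_b2_filter.
  replace (INR (nsum (fun x => b2 (cD p R D x)) (seq 0 N))) with (INR (cnt p R D N)) by reflexivity.
  rewrite (rprod_mult (fun _ => -(1-z)) (fun t => INR R / INR (p t))), rprod_const, rprod_ratio by auto.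
  rewrite (rprod_mult (fun _ => (1-z)) (fun _ => INR R)), !rprod_const, <- pow_INR.
  pose proof (cnt_real p R D N G) as Hc. set (X := INR (cnt p R D N)) in *. set (Y := INR (R ^ length D) / INR (m_I p D)) in *.
  set (k := length D) in *.
  assert (Rabs ((-(1-z))^k) = (1-z)^k) by (rewrite <- RPow_abs, Rabs_Ropp, Rabs_right; lra).
  assert (Rabs ((-(1-z))^k * X - (-(1-z))^k * (INR N * Y)) <= (1-z)^k * INR (R ^ k)).
  { rewrite <- Rmult_minus_distr_l, Rabs_mult. rewrite H. apply Rmult_le_compat_l; auto. apply pow_le; lra. }
  pose proof (Rle_abs ((-(1-z))^k * X - (-(1-z))^k * (INR N * Y))). lra.
Qed.
Open Scope R_scope.

Lemma exp_le x y : x <= y -> exp x <= exp y.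
Proof. intros H. destruct H as [H|H]; [apply Rlt_le, exp_increasing; auto| rewrite H; lra]. Qed.
Lemma exp_le_inv x y : exp x <= exp y -> x <= y.
Proof. intros H. destruct (Rle_lt_dec x y); auto. apply exp_increasing in r. lra. Qed.
Lemma ln_le x y : 0 < x -> x <= y -> ln x <= ln y.
Proof. intros H H0. destruct H0 as [H1|H1]; [apply Rlt_le, ln_increasing; auto| rewrite H1; lra]. Qed.

Lemma exp_pow a n : exp a ^ n = exp (INR n * a).
Proof. induction n. simpl; rewrite Rmult_0_l, exp_0; lra.
  rewrite S_INR, <- tech_pow_Rmult, IHn, <- exp_plus. f_equal; ring. Qed.

Lemma exp_lb u n : 0 <= u -> (u / INR (S n)) ^ (S n) <= exp u.
Proof. intros Hu. replace (exp u) with (exp (u / INR (S n)) ^ (S n)).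
  apply pow_incr. split. apply Rmult_le_pos; auto. apply Rlt_le, Rinv_0_lt_compat, lt_0_INR; lia.
  pose proof (exp_ineq1_le (u / INR (S n))). lra.
  rewrite exp_pow. f_equal. field. apply not_0_INR; lia. Qed.

Lemma rprod_exp_sum c l : rprod (fun t => exp (c t)) l = exp (rsum c l).
Proof. induction l; simpl. rewrite exp_0; lra. rewrite IHl, exp_plus; lra. Qed.

Lemma rprod_le f g l : (forall t, In t l -> 0 <= f t <= g t) -> rprod f l <= rprod g l.
Proof. induction l; simpl; intros H. lra. assert (0 <= f a <= g a) by auto.
  assert (0 <= rprod f l) by (apply rprod_nonneg; intros; apply H; simpl; auto).
  apply Rmult_le_compat; try lra. apply IHl; intros; apply H; simpl; auto. Qed.

Lemma fold_rprod f l : fold_right Rmult 1 (map f l) = rprod f l.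
Proof. induction l; simpl; auto. rewrite IHl; auto. Qed.

Lemma factor_lb u : 0 <= u < 1 -> exp u <= / (1 - u).
Proof. intros Hu. pose proof (exp_ineq1_le (-u)). rewrite exp_Ropp in H.
  assert (0 < exp u) by apply exp_pos.
  assert (0 < 1 - u) by lra. apply Rmult_le_reg_r with (1 - u); auto.
  rewrite Rinv_l by lra. apply Rmult_le_reg_l with (/ exp u). apply Rinv_0_lt_compat; auto.
  rewrite <- Rmult_assoc, Rinv_l, Rmult_1_l, Rmult_1_r by lra. lra. Qed.

Lemma factor_ub u d : 0 <= u <= d -> d <= /2 -> / (1 - u) <= exp (u * (1 + 2 * d)).
Proof. intros Hu Hd. pose proof (exp_ineq1_le (u * (1 + 2 * d))).
  assert (/ (1 - u) <= 1 + u + 2 * u * u).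
  { assert (0 < 1 - u) by lra. apply Rmult_le_reg_r with (1 - u); auto. rewrite Rinv_l by lra. nra. }
  nra. Qed.
Open Scope R_scope.

Lemma L_bounds eps y : 0 <= eps -> 1 <= y -> 1 <= INR (Z.to_nat (floorZ (Rpower y (1/3 - eps))) + 1) /\
   INR (Z.to_nat (floorZ (Rpower y (1/3 - eps))) + 1) ^ 3 <= 8 * y.
Proof. intros He Hy. rewrite plus_INR. simpl (INR 1). set (a := Rpower y (1/3 - eps)).
  assert (Ha0 : 0 <= a) by (unfold a, Rpower; apply Rlt_le, exp_pos).
  assert (Hfl : INR (Z.to_nat (floorZ a)) <= a).
  { unfold floorZ. destruct (base_Int_part a) as [H1 _]. destruct (Z_le_gt_dec 0 (Int_part a)).
    - rewrite INR_IZR_INZ, Z2Nat.id; auto.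
    - replace (Z.to_nat (Int_part a)) with 0%nat by lia. simpl; lra. }
  pose proof (pos_INR (Z.to_nat (floorZ a))).
  assert (Hb : a <= Rpower y (1/3)) by (apply Rle_Rpower; lra).
  assert (Hb1 : 1 <= Rpower y (1/3)) by (apply Rle_trans with (Rpower y 0); [rewrite Rpower_O; lra| apply Rle_Rpower; lra]).
  assert (Hc : Rpower y (1/3) ^ 3 = y).
  { rewrite <- Rpower_pow by (unfold Rpower; apply exp_pos). rewrite Rpower_mult.
    replace (1/3 * INR 3) with 1 by (simpl; field). apply Rpower_1; lra. }
  split. lra.
  set (b := Rpower y (1/3)) in *.
  assert (INR (Z.to_nat (floorZ a)) + 1 <= 2 * b) by lra.
  replace (8 * y) with ((2 * b) ^ 3) by (rewrite <- Hc; ring).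
  apply pow_incr; lra.
Qed.

Lemma asym_P0 m l Lam y : 1 <= m -> 1 <= l -> l ^ 3 <= 8 * y -> y / 2 <= Lam -> Lam <= y ->
  1 <= y -> 874800 * m ^ 7 <= y ->
  2 * (2 * m * l * l) + 4 * l * Lam + 2 <= exp (exp (4 / (m * l) * Lam)).
Proof. intros Hm Hl Hl3 HL1 HL2 Hy Hy0.
  assert (Hl8 : l <= 8 * y) by (simpl in Hl3; nra).
  assert (Hml : 0 < m * l) by nra.
  set (v := 4 / (m * l) * Lam).
  assert (Hv : v * (m * l) = 4 * Lam) by (unfold v; field; lra).
  assert (Hv0 : 0 <= v) by (unfold v; apply Rmult_le_pos; [apply Rlt_le, Rdiv_lt_0_compat; lra| lra]).
  assert (Hv3 : y ^ 2 <= v ^ 3 * m ^ 3).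
  { assert (E : v ^ 3 * m ^ 3 * l ^ 3 = 64 * Lam ^ 3) by (replace (v^3*m^3*l^3) with ((v*(m*l))^3) by ring; rewrite Hv; ring).
    assert (Lam ^ 3 >= y ^ 3 / 8).
    { assert (0 <= y / 2) by lra. pose proof (pow_incr (y/2) Lam 3 ltac:(lra)). 
      replace ((y/2)^3) with (y ^ 3 / 8) in H0 by field. lra. }
    assert (v ^ 3 * m ^ 3 * l ^ 3 >= 8 * y ^ 3) by lra.
    assert (0 <= v ^ 3 * m ^ 3) by (apply Rmult_le_pos; apply pow_le; lra).
    assert (v ^ 3 * m ^ 3 * l ^ 3 <= v ^ 3 * m ^ 3 * (8 * y)) by (apply Rmult_le_compat_l; auto).
    simpl in *. nra. }
  pose proof (exp_lb v 2 Hv0) as E1. replace (INR 3) with 3 in E1 by (simpl; ring).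
  set (u := y ^ 2 / (27 * m ^ 3)).
  assert (Hm3 : 0 < m ^ 3) by (apply pow_lt; lra).
  assert (Hu : u <= exp v).
  { unfold u. replace ((v / 3) ^ 3) with (v ^ 3 / 27) in E1 by field.
    apply Rle_trans with (v ^ 3 / 27); auto. apply Rmult_le_reg_r with (27 * m ^ 3). nra.
    unfold Rdiv. rewrite Rmult_assoc, Rinv_l by nra. nra. }
  assert (Hu0 : 0 <= u) by (unfold u; apply Rmult_le_pos; [apply pow_le; lra| apply Rlt_le, Rinv_0_lt_compat; nra]).
  pose proof (exp_lb u 1 Hu0) as E2. replace (INR 2) with 2 in E2 by (simpl; ring).
  apply Rle_trans with ((u / 2) ^ 2); [| apply Rle_trans with (exp u); [auto| apply exp_le; auto]].
  assert (Hu2 : (u / 2) ^ 2 = y ^ 4 / (2916 * m ^ 6)) by (unfold u; field; lra).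
  rewrite Hu2.
  assert (Hm6 : 0 < m ^ 6) by (apply pow_lt; lra).
  assert (B1 : 2 * (2 * m * l * l) + 4 * l * Lam + 2 <= 300 * m * y ^ 2).
  { assert (l * l <= 64 * y * y) by nra. assert (l * Lam <= 8 * y * y) by nra. simpl. nra. }
  apply Rle_trans with (300 * m * y ^ 2); auto.
  apply Rmult_le_reg_r with (2916 * m ^ 6). nra. unfold Rdiv.
  replace (y ^ 4 * / (2916 * m ^ 6) * (2916 * m ^ 6)) with (y^4) by (field; lra).
  assert (y ^ 2 >= 874800 * m ^ 7).
  { assert (m ^ 7 >= 1) by (rewrite <- (pow1 7); apply Rle_ge, pow_incr; lra). simpl; nra. }
  replace (300 * m * y ^ 2 * (2916 * m ^ 6)) with (874800 * m ^ 7 * y ^ 2) by (simpl; ring).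
  replace (y ^ 4) with (y ^ 2 * y ^ 2) by ring.
  apply Rmult_le_compat_r. apply pow_le; lra. lra.
Qed.

Lemma asym_eps m eps y : 1 <= m -> 0 < eps -> 1 <= y -> 200000 * m^2 * (5/eps)^5 <= y ->
  200000 * m^2 * y^4 <= exp (eps * y).
Proof. intros Hm He Hy H. assert (0 <= eps * y) by nra.
  pose proof (exp_lb (eps * y) 4 H0) as E. replace (INR 5) with 5 in E by (simpl; ring).
  apply Rle_trans with ((eps * y / 5) ^ 5); auto.
  replace ((eps * y / 5) ^ 5) with (y * (eps / 5) ^ 5 * y ^ 4) by (field).
  apply Rmult_le_compat_r. apply pow_le; lra.
  assert (0 < (eps/5)^5) by (apply pow_lt; lra).
  assert ((5/eps)^5 * (eps/5)^5 = 1) by (rewrite <- Rpow_mult_distr; replace (5/eps*(eps/5)) with 1 by (field; lra); apply pow1).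
  nra. Qed.

Lemma asym_err m l Lam y yn r E1 eps :
  1 <= m -> 1 <= l -> l <= 8 * y -> 0 <= Lam <= y -> 0 <= yn <= y + 1 -> 1 <= y -> r = 2 * m * l * l ->
  1 <= E1 -> 200000 * m^2 * y^4 <= exp (eps * y) ->
  2 * (2 * r + 6 * l * yn) * (E1 + 2 * r) + 2 * l * Lam <= E1 * exp (eps * y).
Proof. intros Hm Hl Hl8 HL Hyn Hy Hr HE Hx. subst r.
  assert (A1 : 2 * (2 * (2 * m * l * l) + 6 * l * yn) <= 704 * m * y ^ 2).
  { assert (l * l <= 64 * y * y) by nra. assert (l * yn <= 16 * y * y) by nra. simpl. nra. }
  assert (A2 : 2 * (2 * m * l * l) <= 256 * m * y ^ 2) by (assert (l * l <= 64 * y * y) by nra; simpl; nra).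
  assert (A0 : 0 <= 2 * (2 * (2 * m * l * l) + 6 * l * yn)) by nra.
  assert (A3 : 2 * (2 * (2 * m * l * l) + 6 * l * yn) * (E1 + 2 * (2 * m * l * l)) <= 704 * m * y ^ 2 * (E1 + 256 * m * y ^ 2)).
  { apply Rmult_le_compat; nra. }
  assert (A4 : 2 * l * Lam <= 16 * y ^ 2) by (simpl; nra).
  assert (A5 : 704 * m * y ^ 2 * (E1 + 256 * m * y ^ 2) + 16 * y ^ 2 <= E1 * (200000 * m ^ 2 * y ^ 4)).
  { assert (1 <= y ^ 2) by (simpl; nra). assert (y ^ 2 <= y ^ 4) by (simpl; nra).
    assert (m <= m ^ 2) by (simpl; nra). 
    assert (0 <= m * y ^ 2) by (simpl; nra). assert (m * y^2 <= m^2 * y^4) by (apply Rmult_le_compat; simpl; nra).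
    assert (E1 * (m^2*y^4) >= m^2 * y^4) by nra.
    assert (E1 * (m*y^2) <= E1 * (m^2 * y^4)) by (apply Rmult_le_compat_l; lra).
    assert (y^2 <= m^2 * y^4) by nra.
    replace (704 * m * y ^ 2 * (E1 + 256 * m * y ^ 2)) with (704 * (E1 * (m * y^2)) + 180224 * (m^2 * y^4)) by ring.
    nra. }
  assert (E1 * (200000 * m ^ 2 * y ^ 4) <= E1 * exp (eps * y)) by (apply Rmult_le_compat_l; lra).
  lra.
Qed.

Lemma T_bound (p : nat -> nat) T Q : 0 <= Q -> (forall t, (t < T)%nat -> INR (p t) <= Q) ->
  (forall t1 t2, (t1 < T)%nat -> (t2 < T)%nat -> p t1 = p t2 -> t1 = t2) -> INR T <= Q + 1.
Proof. intros HQ Hp Hi. destruct (archimed Q) as [A1 A2].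
  assert (Hu : (0 <= up Q)%Z) by (apply le_IZR; lra).
  assert (HB : INR (Z.to_nat (up Q)) = IZR (up Q)) by (rewrite INR_IZR_INZ, Z2Nat.id; auto).
  assert ((T <= Z.to_nat (up Q))%nat).
  { rewrite <- (length_seq T 0). replace (length (seq 0 T)) with (length (map p (seq 0 T))) by apply length_map.
    rewrite <- (length_seq (Z.to_nat (up Q)) 0). apply NoDup_incl_length.
    - apply NoDup_map_NoDup_ForallPairs; [|apply seq_NoDup]. intros a b Ha Hb E. apply in_seq in Ha, Hb. apply Hi; lia.
    - intros v Hv. apply in_map_iff in Hv. destruct Hv as [t [<- Ht]]. apply in_seq in Ht. apply in_seq.
      split; [lia|]. cut (p t < Z.to_nat (up Q))%nat; [lia|]. apply INR_lt. rewrite HB. specialize (Hp t ltac:(lia)). lra. }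
  apply le_INR in H. lra. Qed.

Lemma filter_and_le {A} (a b : A -> bool) l : (length (filter (fun h => andb (a h) (b h)) l) <= length (filter b l))%nat.
Proof. induction l; simpl; auto. destruct (a a0), (b a0); simpl; lia. Qed.

Lemma euler_bounds (p : nat -> nat) T P0 : 2 <= P0 -> (forall t, (t < T)%nat -> P0 <= INR (p t)) ->
  exp (rsum (fun t => / INR (p t)) (seq 0 T)) <= euler_prod p T /\
  euler_prod p T <= exp ((1 + 2 / P0) * rsum (fun t => / INR (p t)) (seq 0 T)).
Proof. intros HP Hp. unfold euler_prod. rewrite fold_rprod. split.
  - rewrite <- rprod_exp_sum. apply rprod_le. intros t Ht. apply in_seq in Ht.
    specialize (Hp t ltac:(lia)). assert (0 < / INR (p t) <= / 2) by (split; [apply Rinv_0_lt_compat; lra| apply Rinv_le_contravar; lra]).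
    split. apply Rlt_le, exp_pos. apply factor_lb; lra.
  - rewrite <- rsum_scal, <- rprod_exp_sum. apply rprod_le. intros t Ht. apply in_seq in Ht.
    specialize (Hp t ltac:(lia)).
    assert (Hu : 0 < / INR (p t) <= / P0) by (split; [apply Rinv_0_lt_compat; lra| apply Rinv_le_contravar; lra]).
    assert (/ P0 <= / 2) by (apply Rinv_le_contravar; lra).
    split. apply Rlt_le, Rinv_0_lt_compat. assert (/2 < 1) by lra. lra.
    replace ((1 + 2 / P0) * / INR (p t)) with (/ INR (p t) * (1 + 2 * / P0)) by (unfold Rdiv; ring).
    apply factor_ub; lra.
Qed.
Open Scope R_scope.

Theorem lemma2p5 :
  forall K : nat, (2 <= K)%nat ->
  exists eps0 : R, 0 < eps0 /\
  forall eps : R, 0 < eps < eps0 ->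
  exists C : R, 0 < C /\
  exists X : R, forall x : R, X <= x ->
  let L := L_of eps x in
  let Q := Q_of eps x in
  let M := M_of K in
  forall (T : nat) (p : nat -> nat),
    (forall t, (t < T)%nat -> prime (Z.of_nat (p t))) ->
    (forall t1 t2, (t1 < T)%nat -> (t2 < T)%nat -> p t1 = p t2 -> t1 = t2) ->
    (forall t, (t < T)%nat ->
        exp (Rpower (ln Q) (4 / INR (M * L))) <= INR (p t) /\ INR (p t) <= Q) ->
    ((2 * M * L * L) ^ 2 <= T)%nat ->
    / 2 * Rpower (ln Q) (1 / INR (M * L)) <= euler_prod p T /\
    euler_prod p T <= 3 / 2 * Rpower (ln Q) (1 / INR (M * L)) ->
    INR (length (H_list p T (2 * M * L * L) (INR K) x)) <=
      C * (INR (16 * M * L * L) ^ (8 * M * M * L * L * L * L)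
           * ln (ln Q) ^ (4 * M * M * L * L * L * L)
           / ln Q ^ (2 * L)) * (INR K * ln x).
Proof.
  intros K HK.
  assert (HK2 : 2 <= INR K) by (apply le_INR in HK; simpl in HK; lra).
  set (m := INR (M_of K)).
  assert (Hm : 65 <= m).
  { unfold m, M_of. rewrite plus_INR, !mult_INR. replace (INR 16) with 16 by (simpl; ring). simpl (INR 1). nra. }
  exists (1/2). split; [lra|]. intros eps [He0 He1].
  exists 3. split; [lra|].
  set (Y0 := 4 + 874800 * m^7 + 200000 * m^2 * (5/eps)^5).
  assert (HY0a : 0 <= 874800 * m^7) by (apply Rmult_le_pos; [lra| apply pow_le; lra]).
  assert (HY0b : 0 <= 200000 * m^2 * (5/eps)^5).
  { apply Rmult_le_pos; [apply Rmult_le_pos; [lra| apply pow_le; lra]| apply pow_le]. 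
    apply Rlt_le, Rdiv_lt_0_compat; lra. }
  assert (HY0 : 4 <= Y0 /\ 874800 * m^7 <= Y0 /\ 200000 * m^2 * (5/eps)^5 <= Y0) by (unfold Y0; lra).
  exists (exp (exp (exp Y0))).
  intros x Hx L Q M T p Hpr Hinj Hrange HT Heul.
  assert (Hx0 : 0 < x) by (pose proof (exp_pos (exp (exp Y0))); lra).
  assert (Hlx : exp (exp Y0) <= ln x) by (rewrite <- (ln_exp (exp (exp Y0))); apply ln_le; [apply exp_pos| auto]).
  assert (Hlx0 : 0 < ln x) by (pose proof (exp_pos (exp Y0)); lra).
  assert (Hll : exp Y0 <= ln (ln x)) by (rewrite <- (ln_exp (exp Y0)); apply ln_le; [apply exp_pos| auto]).
  assert (Hll0 : 0 < ln (ln x)) by (pose proof (exp_pos Y0); lra).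
  set (y := ln (ln (ln x))).
  assert (Hy : Y0 <= y) by (unfold y; rewrite <- (ln_exp Y0); apply ln_le; [apply exp_pos| auto]).
  assert (Ey : ln (ln x) = exp y) by (unfold y; rewrite exp_ln; auto).
  assert (Elx : ln x = exp (exp y)) by (rewrite <- Ey, exp_ln; auto).
  assert (Hy1 : 4 <= y) by lra.
  assert (ElnQ : ln Q = exp ((1 - eps) * y)) by (unfold Q, Q_of; rewrite ln_exp; reflexivity).
  set (Lam := (1 - eps) * y).
  assert (ELam : ln (ln Q) = Lam) by (rewrite ElnQ, ln_exp; reflexivity).
  assert (HLam : y / 2 <= Lam <= y) by (unfold Lam; split; nra).
  set (l := INR L).
  destruct (L_bounds eps y ltac:(lra) ltac:(lra)) as [Hl1 Hl3].
  assert (El : l = INR (Z.to_nat (floorZ (Rpower y (1/3 - eps))) + 1)) by reflexivity.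
  rewrite <- El in Hl1, Hl3.
  assert (Hl8 : l <= 8 * y) by (simpl in Hl3; assert (1 <= l * l) by nra; nra).
  assert (EmM : INR M = m) by reflexivity.
  assert (EML : INR (M * L) = m * l) by (rewrite mult_INR; reflexivity).
  set (R := (2 * M * L * L)%nat).
  set (r := INR R).
  assert (Er : r = 2 * m * l * l) by (unfold r, R; rewrite !mult_INR; reflexivity).
  assert (Hr0 : 0 <= r) by (rewrite Er; nra).
  set (P0 := exp (exp (4 / (m * l) * Lam))).
  assert (EP0 : exp (Rpower (ln Q) (4 / INR (M * L))) = P0).
  { unfold P0, Rpower. rewrite ELam, EML. reflexivity. }
  assert (HP0 : 2 * r + 4 * l * Lam + 2 <= P0).
  { rewrite Er. unfold P0. apply (asym_P0 m l Lam y); try lra. }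
  assert (HlL : 0 <= l * Lam) by nra.
  assert (Hplb : forall t, (t < T)%nat -> P0 <= INR (p t)) by (intros t Ht; rewrite <- EP0; apply Hrange; auto).
  assert (HRp : forall t, (t < T)%nat -> prime (Z.of_nat (p t)) /\ (R < p t)%nat).
  { intros t Ht. split; auto. apply INR_lt. fold r. specialize (Hplb t Ht). nra. }
  assert (HP2 : 2 <= P0) by nra.
  destruct (euler_bounds p T P0 HP2 Hplb) as [Eu1 Eu2].
  set (sg := rsum (fun t => / INR (p t)) (seq 0 T)) in *.
  assert (Hsg0 : 0 <= sg).
  { apply rsum_nonneg. intros t Ht. apply in_seq in Ht. specialize (Hplb t ltac:(lia)).
    apply Rlt_le, Rinv_0_lt_compat. lra. }
  assert (EG : Rpower (ln Q) (1 / INR (M * L)) = exp (1 / (m * l) * Lam)).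
  { unfold Rpower. rewrite ELam, EML. reflexivity. }
  rewrite EG in Heul. destruct Heul as [Heu1 Heu2].
  assert (He2 : 2 <= exp 1) by (pose proof (exp_ineq1_le 1); lra).
  assert (Hml : 0 < m * l) by nra.
  assert (Hs1 : sg <= 1 + 1 / (m * l) * Lam).
  { apply exp_le_inv. rewrite exp_plus. pose proof (exp_pos (1 / (m * l) * Lam)). nra. }
  assert (Hs2 : 1 / (m * l) * Lam <= 1 + (1 + 2 / P0) * sg).
  { apply exp_le_inv. rewrite exp_plus. pose proof (exp_pos ((1 + 2 / P0) * sg)). nra. }
  set (s := rsum (fun t => INR R / INR (p t)) (seq 0 T)).
  assert (Es : s = r * sg) by (unfold s, sg; rewrite <- rsum_scal; reflexivity).
  assert (Hrml : r * (1 / (m * l) * Lam) = 2 * l * Lam) by (rewrite Er; field; lra).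
  assert (Hsu : s <= r + 2 * l * Lam).
  { rewrite Es, <- Hrml. assert (r * sg <= r * (1 + 1 / (m * l) * Lam)) by (apply Rmult_le_compat_l; lra). lra. }
  assert (Hsl : 2 * l * Lam - r - 1 <= s).
  { assert (r * (1 / (m * l) * Lam) <= r * (1 + (1 + 2 / P0) * sg)) by (apply Rmult_le_compat_l; lra).
    rewrite Hrml in H. 
    assert (HPp : 0 < P0) by lra.
    assert (2 / P0 * s <= 1).
    { apply Rmult_le_reg_r with P0; auto. unfold Rdiv. replace (2 * / P0 * s * P0) with (2 * s) by (field; lra). nra. }
    assert (r * (1 + (1 + 2 / P0) * sg) = r + s + 2 / P0 * s) by (rewrite Es; ring).
    lra. }
  set (z := / Lam).
  assert (HLam2 : 2 <= Lam) by lra.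
  assert (Hz : 0 < z <= 1) by (unfold z; split; [apply Rinv_0_lt_compat; lra| rewrite <- Rinv_1; apply Rinv_le_contravar; lra]).
  assert (Hiz : / z = Lam) by (unfold z; rewrite Rinv_inv; reflexivity).
  set (Yn := Z.to_nat (up y)).
  assert (HYn : y <= INR Yn <= y + 1).
  { destruct (archimed y) as [A1 A2]. assert (0 <= up y)%Z by (apply le_IZR; lra).
    unfold Yn. rewrite INR_IZR_INZ, Z2Nat.id by auto. lra. }
  set (k0 := (2 * R + 6 * L * Yn)%nat).
  set (Kc := (2 * k0)%nat).
  assert (HKc : Nat.even Kc = true) by (unfold Kc; rewrite Nat.even_mul; reflexivity).
  set (W := INR K * ln x).
  set (N' := (Z.to_nat (up W) + 1)%nat).
  assert (HW : 2 <= W).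
  { unfold W. assert (1 <= ln x) by (pose proof (exp_ineq1_le (exp Y0)); pose proof (exp_pos Y0); lra). nra. }
  assert (HN' : INR N' <= 2 * W).
  { destruct (archimed W) as [A1 A2]. assert (0 <= up W)%Z by (apply le_IZR; lra).
    unfold N'. rewrite plus_INR, INR_IZR_INZ, Z2Nat.id by auto. simpl (INR 1). lra. }
  assert (Hlen : INR (length (H_list p T (2 * M * L * L) (INR K) x)) <= INR (length (filter (admissibleb p T R) (seq 0 N')))).
  { apply le_INR. unfold H_list. apply (filter_and_le (fun h => if Rle_dec (INR h) (INR K * ln x) then true else false)). }
  pose proof (sieve_bound p T R N' Kc z Hz HKc HRp Hinj) as HS.
  rewrite Hiz in HS.
  set (S1 := rsum (trunc Kc (fun t => -(1-z) * (INR R / INR (p t)))) (sublists (seq 0 T))) in HS.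
  set (S2 := rsum (trunc Kc (fun _ => (1-z) * INR R)) (sublists (seq 0 T))) in HS.
  assert (Hrho : forall t, (t < T)%nat -> 0 <= INR R / INR (p t) <= 1).
  { intros t Ht. specialize (Hplb t Ht). assert (0 < INR (p t)) by lra. split.
    apply Rmult_le_pos; [apply pos_INR| apply Rlt_le, Rinv_0_lt_compat; lra].
    apply Rmult_le_reg_r with (INR (p t)); auto. replace (INR R / INR (p t) * INR (p t)) with (INR R) by (field; lra).
    change (INR R) with r. lra. }
  assert (HS1 : S1 <= exp (- (1 - z) * s) + (/2)^Kc * exp (2 * s)).
  { unfold S1. eapply Rle_trans. apply (tail_bound Kc _ (fun t => INR R / INR (p t))).
    - intros t. rewrite Rabs_mult. assert (0 <= INR R / INR (p t)).
      { destruct (Nat.eq_dec (p t) 0) as [E|E]. rewrite E. simpl. unfold Rdiv. rewrite Rinv_0. lra.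
        apply Rmult_le_pos; [apply pos_INR| apply Rlt_le, Rinv_0_lt_compat, lt_0_INR; lia]. }
      rewrite (Rabs_right (INR R / INR (p t))) by lra. rewrite Rabs_Ropp, Rabs_right by lra. nra.
    - apply Rplus_le_compat.
      + eapply Rle_trans. apply rprod_exp. intros t Ht. apply in_seq in Ht. specialize (Hrho t ltac:(lia)). nra.
        apply exp_le. unfold s. rewrite rsum_scal. lra.
      + apply Rmult_le_compat_l. apply pow_le; lra.
        eapply Rle_trans. apply rprod_exp. intros t Ht. apply in_seq in Ht. specialize (Hrho t ltac:(lia)). nra.
        apply exp_le. unfold s. rewrite rsum_scal. lra. }
  assert (HzL : z * Lam = 1) by (unfold z; field; lra).
  assert (HS1a : exp (-(1-z)*s) <= exp (-2*l*Lam) * exp (2*r + 2*l + 1)).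
  { rewrite <- exp_plus. apply exp_le.
    assert (z * s <= z * (r + 2 * l * Lam)) by (apply Rmult_le_compat_l; lra).
    assert (z * (r + 2 * l * Lam) = z * r + 2 * l) by (replace (z * (r + 2 * l * Lam)) with (z * r + 2 * l * (z * Lam)) by ring; rewrite HzL; ring).
    assert (z * r <= r) by nra. nra. }
  assert (Ek0 : INR k0 = 2 * r + 6 * l * INR Yn) by (unfold k0; rewrite plus_INR, !mult_INR; simpl (INR 2); simpl (INR 6); unfold r, l; ring).
  assert (HS1b : (/2)^Kc * exp (2 * s) <= exp (-2*l*Lam)).
  { unfold Kc. rewrite pow_mult.
    assert (H4 : (/2)^2 <= / exp 1) by (simpl; pose proof exp_le_3; 
       replace (/2 * (/2 * 1)) with (/4) by field; apply Rinv_le_contravar; [apply exp_pos| lra]).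
    assert (((/2)^2)^k0 <= (/ exp 1) ^ k0) by (apply pow_incr; split; [simpl; lra| auto]).
    rewrite (pow_inv (exp 1) k0), exp_pow, <- exp_Ropp in H.
    apply Rle_trans with (exp (- (INR k0 * 1)) * exp (2 * s)).
    apply Rmult_le_compat_r; [apply Rlt_le, exp_pos| auto].
    rewrite <- exp_plus. apply exp_le. rewrite Ek0. 
    assert (l * Lam <= l * INR Yn) by (apply Rmult_le_compat_l; lra). lra. }
  assert (HS1' : S1 <= exp (-2*l*Lam) * exp (4 * r)).
  { assert (Hlr : l + 1 <= r) by (rewrite Er; nra).
    assert (exp (2*r + 2*l + 1) * 2 <= exp (4 * r)).
    { apply Rle_trans with (exp (2*r+2*l+1) * exp 1). apply Rmult_le_compat_l; [apply Rlt_le, exp_pos| lra].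
      rewrite <- exp_plus. apply exp_le. lra. }
    pose proof (exp_pos (-2*l*Lam)). pose proof (exp_pos (2*r + 2*l + 1)).
    assert (exp (-2*l*Lam) * (exp (2*r + 2*l + 1) * 2) <= exp (-2*l*Lam) * exp (4 * r)) by (apply Rmult_le_compat_l; lra).
    assert (1 <= exp (2*r + 2*l + 1)) by (pose proof (exp_ineq1_le (2*r + 2*l + 1)); lra).
    assert (exp (-2*l*Lam) <= exp (-2*l*Lam) * exp (2*r + 2*l + 1)) by nra.
    assert (exp (-2*l*Lam) * (exp (2*r + 2*l + 1) * 2) = 2 * (exp (-2*l*Lam) * exp (2*r + 2*l + 1))) by ring.
    lra. }
  assert (HQ0 : 0 < Q) by (unfold Q, Q_of; apply exp_pos).
  set (E1 := exp ((1 - eps) * y)) in *.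
  assert (HE1 : 1 <= E1) by (unfold E1; pose proof (exp_ineq1_le ((1-eps)*y)); nra).
  assert (EQ : Q = exp E1) by (rewrite <- ElnQ, exp_ln; auto).
  assert (HQ1 : 1 <= Q) by (rewrite EQ; pose proof (exp_ineq1_le E1); lra).
  assert (HTQ : INR T <= Q + 1) by (apply (T_bound p T Q); [lra| intros; apply Hrange; auto| auto]).
  assert (HS2 : S2 <= exp (INR Kc * (E1 + 2 * r))).
  { unfold S2. eapply Rle_trans. apply err_bound. apply Rmult_le_pos; [lra| apply pos_INR]. rewrite length_seq. change (INR R) with r.
    rewrite <- exp_pow. apply pow_incr. split. assert (0 <= INR T * ((1-z)*r)) by (apply Rmult_le_pos; [apply pos_INR| nra]). lra.
    rewrite exp_plus, <- EQ.
    assert (INR T * ((1 - z) * r) <= (Q + 1) * r) by (pose proof (pos_INR T); apply Rle_trans with ((Q+1) * ((1-z)*r)); [apply Rmult_le_compat_r; nra| apply Rmult_le_compat_l; nra]).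
    assert (1 + 2 * r <= exp (2 * r)) by apply exp_ineq1_le. nra. }
  assert (EKc : INR Kc = 2 * (2 * r + 6 * l * INR Yn)) by (unfold Kc; rewrite mult_INR, Ek0; simpl (INR 2); ring).
  assert (Hasym : INR Kc * (E1 + 2 * r) + 2 * l * Lam <= exp y).
  { rewrite EKc. replace (exp y) with (E1 * exp (eps * y)) by (unfold E1; rewrite <- exp_plus; f_equal; ring).
    apply (asym_err m l Lam y (INR Yn) r E1 eps); try lra.
    apply (asym_eps m eps y); lra. }
  assert (EL2 : ln Q ^ (2 * L) = exp (2 * l * Lam)).
  { rewrite ElnQ. unfold E1. rewrite exp_pow. f_equal. rewrite mult_INR. simpl (INR 2). unfold l, Lam. ring. }
  rewrite EL2, ELam.
  replace (4 * M * M * L * L * L * L)%nat with (R * R)%nat by (unfold R; ring).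
  fold W.
  set (A := INR (16 * M * L * L) ^ (8 * M * M * L * L * L * L)).
  assert (HA : exp (4 * r) <= A).
  { assert (HB : 16 <= INR (16 * M * L * L)) by (rewrite !mult_INR; fold l; rewrite EmM; replace (INR 16) with 16 by (simpl; ring); nra).
    assert (exp (4 * r) = exp 1 ^ (4 * R)) by (rewrite exp_pow, mult_INR; fold r; f_equal; simpl; ring).
    rewrite H. unfold A. apply Rle_trans with (INR (16 * M * L * L) ^ (4 * R)).
    apply pow_incr. pose proof exp_le_3. pose proof (exp_pos 1). lra.
    apply Rle_pow. lra. unfold R.
    assert (1 <= M)%nat by (unfold M, M_of; lia). assert (1 <= L)%nat by (unfold L, L_of; lia). nia. }
  assert (HA1 : 1 <= A) by (pose proof (exp_ineq1_le (4 * r)); lra).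
  set (V := Lam ^ (R * R)).
  assert (HV : 0 <= V) by (apply pow_le; lra).
  set (Dd := exp (2 * l * Lam)).
  assert (HD : 0 < Dd) by apply exp_pos.
  assert (EDm : exp (-2 * l * Lam) = / Dd) by (unfold Dd; rewrite <- exp_Ropp; f_equal; ring).
  rewrite EDm in HS1'.
  assert (HlnxW : ln x <= W) by (unfold W; nra).
  assert (HS2' : S2 * Dd <= W).
  { apply Rle_trans with (exp (INR Kc * (E1 + 2 * r)) * Dd). apply Rmult_le_compat_r; lra.
    unfold Dd. rewrite <- exp_plus. apply Rle_trans with (exp (exp y)). apply exp_le; lra. rewrite <- Elx. auto. }
  eapply Rle_trans. apply Hlen. eapply Rle_trans. apply HS.
  assert (HS1n : INR N' * S1 <= 2 * W * (/ Dd * exp (4 * r))).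
  { apply Rle_trans with (INR N' * (/ Dd * exp (4 * r))). apply Rmult_le_compat_l. apply pos_INR. auto.
    apply Rmult_le_compat_r. apply Rmult_le_pos. apply Rlt_le, Rinv_0_lt_compat; auto. apply Rlt_le, exp_pos. auto. }
  assert (HS2'' : S2 <= W / Dd).
  { apply Rmult_le_reg_r with Dd; auto. unfold Rdiv. rewrite Rmult_assoc, Rinv_l, Rmult_1_r by lra. auto. }
  assert (Hfin : INR N' * S1 + S2 <= 3 * (A / Dd) * W).
  { assert (2 * W * (/ Dd * exp (4 * r)) <= 2 * W * (A / Dd)).
    { apply Rmult_le_compat_l. lra. unfold Rdiv. rewrite Rmult_comm. apply Rmult_le_compat_r; auto.
      apply Rlt_le, Rinv_0_lt_compat; auto. }
    assert (W / Dd <= A / Dd * W).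
    { replace (A / Dd * W) with (A * (W / Dd)) by (field; lra).
      assert (0 <= W / Dd) by (apply Rmult_le_pos; [lra| apply Rlt_le, Rinv_0_lt_compat; auto]). nra. }
    lra. }
  replace (3 * (A * V / Dd) * W) with (V * (3 * (A / Dd) * W)) by (field; lra).
  apply Rmult_le_compat_l; auto.
Qed.
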